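(* Let $f\in\mathbb{R}[X_1,\dots,X_n]$ be a form of degree $2d$ with $f_{2d,i}>0$ for $i=1,\dots,n$, and suppose $$\sum_{\alpha\in\Delta}\frac{|f_{\alpha}|\,\alpha^{\alpha/2d}}{2d\prod_{i=1}^nf_{2d,i}^{\alpha_i/2d}}\leq 1.$$ Then $f$ is SOBS.
   Context: $\mathbb{N}=\{0,1,2,\dots\}$. For $\alpha\in\mathbb{N}^n$ write $\underline{X}^\alpha=X_1^{\alpha_1}\cdots X_n^{\alpha_n}$, $|\alpha|=\sum_i\alpha_i$, and $\alpha^{\alpha/2d}=\prod_i\alpha_i^{\alpha_i/2d}$ with the convention $0^0=1$. For $f=\sum_\alpha f_\alpha\underline{X}^\alpha$ of degree $2d$, $f_{2d,i}$ denotes the coefficient of $X_i^{2d}$, $\Omega=\{\alpha: f_\alpha\ne0\}\setminus\{\underline{0},2d\epsilon_1,\dots,2d\epsilon_n\}$ ($\epsilon_i$ the standard unit vectors), and $\Delta=\{\alpha\in\Omega:\ f_\alpha<0\text{ or }\alpha_i\text{ odd for some }i\}$. SOBS means a finite sum of squares of polynomials of the form $a\underline{X}^\alpha-b\underline{X}^\beta$, $a,b\in\mathbb{R}$. *)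

(* Defs.v *)
From Stdlib Require Import Reals.
From HB Require Import structures.
From mathcomp Require Import all_boot all_order all_algebra.
From mathcomp Require Import Rstruct.
From mathcomp Require Import mpoly.

Set Implicit Arguments.
Unset Strict Implicit.
Unset Printing Implicit Defensive.

Import Order.TTheory GRing.Theory Num.Theory.
Local Open Scope ring_scope.

(* Real power x^y with the convention 0^0 = 1 (and 0^y = 0 for y <> 0);
   for x > 0 this is Stdlib's Rpower x y. *)
Definition rpow (x y : R) : R :=
  if x == 0 then (if y == 0 then 1 else 0) else Rpower x y.

Definition mono_pure (n : nat) (i : 'I_n) (k : nat) : 'X_{1..n} :=
  [multinom (if j == i then k else 0%N) | j < n].

Definition coef_pure (n d : nat) (f : {mpoly R[n]}) (i : 'I_n) : R :=
  f@_(mono_pure i (2 * d)).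

Definition OmegaF (n d : nat) (f : {mpoly R[n]}) : pred 'X_{1..n} :=
  fun a => (f@_a != 0) && (a != 0%MM) && [forall i : 'I_n, a != mono_pure i (2 * d)].

Definition DeltaF (n d : nat) (f : {mpoly R[n]}) : pred 'X_{1..n} :=
  fun a => OmegaF d f a && ((f@_a < 0) || [exists i : 'I_n, odd (a i)]).

Definition delta_term (n d : nat) (f : {mpoly R[n]}) (a : 'X_{1..n}) : R :=
  `|f@_a| * (\prod_(i < n) rpow (a i)%:R ((a i)%:R / (2 * d)%:R))
  / ((2 * d)%:R * \prod_(i < n) rpow (coef_pure d f i) ((a i)%:R / (2 * d)%:R)).

Definition SOBS (n : nat) (f : {mpoly R[n]}) : Prop :=
  exists s : seq (R * R * 'X_{1..n} * 'X_{1..n}),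
    f = \sum_(t <- s) (t.1.1.1 *: 'X_[t.1.2] - t.1.1.2 *: 'X_[t.2]) ^+ 2.

(* Main.v *)
Require Import Defs.
From Stdlib Require Import Reals.
From HB Require Import structures.
From mathcomp Require Import all_boot all_order all_algebra.
From mathcomp Require Import Rstruct.
From mathcomp Require Import mpoly.
From mathcomp Require Import ring lra zify.
Import Order.TTheory GRing.Theory Num.Theory.
Local Open Scope ring_scope.

Section Cone.
Variable n : nat.
Implicit Types p q : {mpoly R[n]}.

Lemma SOBS0 : SOBS (0 : {mpoly R[n]}).
Proof. by exists [::]; rewrite big_nil. Qed.

Lemma SOBSD p q : SOBS p -> SOBS q -> SOBS (p + q).
Proof. by move=> [s ->] [s' ->]; exists (s ++ s'); rewrite big_cat. Qed.
Arguments SOBSD {p q}.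

Lemma SOBS_sum (I : Type) (r : seq I) (P : pred I) (F : I -> {mpoly R[n]}) :
  (forall i, P i -> SOBS (F i)) -> SOBS (\sum_(i <- r | P i) F i).
Proof. by move=> H; apply: big_ind => //; [exact: SOBS0 | move=> x y; exact: SOBSD]. Qed.

Lemma SOBS_bin a b (x y : 'X_{1..n}) :
  SOBS ((a *: 'X_[x] - b *: 'X_[y]) ^+ 2 : {mpoly R[n]}).
Proof. by exists [:: (a, b, x, y)]; rewrite big_seq1. Qed.

Lemma SOBSZ c p : 0 <= c -> SOBS p -> SOBS (c *: p).
Proof.
move=> c0 [s ->].
exists [seq (Num.sqrt c * t.1.1.1, Num.sqrt c * t.1.1.2, t.1.2, t.2) | t <- s].
rewrite big_map scaler_sumr; apply: eq_bigr => t _ /=.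
by rewrite -!scalerA -scalerBr exprZn sqr_sqrtr.
Qed.
Arguments SOBSZ {c p}.

Lemma SOBS_msq c (m : 'X_{1..n}) : 0 <= c -> SOBS (c *: 'X_[m + m] : {mpoly R[n]}).
Proof.
move=> c0; have := SOBS_bin (Num.sqrt c) 0 m m.
by rewrite scale0r subr0 exprZn sqr_sqrtr // expr2 -mpolyXD.
Qed.

Definition tpow (t : 'I_n -> R) (x : 'X_{1..n}) : R := \prod_(i < n) t i ^+ x i.
Definition Mt t x : {mpoly R[n]} := tpow t x *: 'X_[x].

Lemma tpowD t x y : tpow t (x + y) = tpow t x * tpow t y.
Proof. rewrite /tpow -big_split; apply eq_bigr => i _; by rewrite mnmDE exprD. Qed.

Lemma basic t y z : SOBS (Mt t (y + y) + Mt t (z + z) - Mt t (y + z) *+ 2).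
Proof.
have -> : Mt t (y+y) + Mt t (z+z) - Mt t (y+z) *+ 2 =
          (tpow t y *: 'X_[y] - tpow t z *: 'X_[z])^+2.
  by rewrite /Mt !tpowD !mpolyXD -!mul_mpolyC !rmorphM /=; ring.
exact: SOBS_bin.
Qed.

Lemma oneD (h : nat -> {mpoly R[n]}) (N0 : nat) :
  (forall i j k, (i + j = k + k)%N -> (i <= N0)%N -> (j <= N0)%N ->
      SOBS (h i + h j - h k *+ 2)) ->
  forall N a k, (a + N <= N0)%N -> (k <= N)%N ->
  SOBS ((N - k)%:R *: h a + k%:R *: h (a + N)%N - N%:R *: h (a + k)%N).
Proof.
move=> hc N; elim/ltn_ind: N => N IH a k haN hk.
have [->|kn0] := eqVneq k 0%N.
  by rewrite addn0 subn0 scale0r addr0 subrr; exact: SOBS0.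
have [->|kN] := eqVneq k N.
  by rewrite subnn scale0r add0r subrr; exact: SOBS0.
have k0 : (0 < k)%N by rewrite lt0n.
have kN' : (k < N)%N by rewrite ltn_neqAle kN hk.
case: (leqP (k + k) N) => hkk.
  have r1 := hc a (a + k + k)%N (a + k)%N ltac:(lia) ltac:(lia) ltac:(lia).
  have r2 := IH (N - k)%N ltac:(lia) (a + k)%N k ltac:(lia) ltac:(lia).
  have e1 : (a + k + (N - k) = a + N)%N by lia.
  rewrite e1 in r2.
  have := SOBSD (SOBSZ (ler0n R (N - k)) r1) r2.
  congr SOBS.
  rewrite !natrB; try lia.
  rewrite -!mul_mpolyC !rmorphB /= !rmorph_nat; ring.
have r1 := hc (a + k + k - N)%N (a + N)%N (a + k)%N ltac:(lia) ltac:(lia) ltac:(lia).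
have r2 := IH k kN' a (k + k - N)%N ltac:(lia) ltac:(lia).
have e1 : (a + (k + k - N) = a + k + k - N)%N by lia.
rewrite e1 in r2.
have := SOBSD (SOBSZ (ler0n R k) r1) r2.
congr SOBS.
rewrite !natrB; try lia.
rewrite -!mul_mpolyC !rmorphB /= !rmorph_nat !natrD; ring.
Qed.

End Cone.

Arguments SOBSD {n p q}.
Arguments SOBSZ {n c p}.
Arguments Mt {n}.
Arguments tpow {n}.
Arguments oneD {n h N0}.

Section Even.
Variable n : nat.
Variable t : 'I_n -> R.
Variable d : nat.
Local Notation V i := (mono_pure i (2 * d)).

Definition cnt (b : 'X_{1..n}) : nat := \sum_(i < n) (b i != 0%N).

Definition Ebody (b : 'X_{1..n}) : {mpoly R[n]} :=
  \sum_(i < n) (b i)%:R *: Mt t (V i) - d%:R *: Mt t (b + b).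

Lemma evenH b : mdeg b = d -> SOBS (Ebody b).
Proof.
have key : forall K b, cnt b = K -> mdeg b = d -> SOBS (Ebody b); last first.
  by move=> hb; exact: (key _ b erefl hb).
elim/ltn_ind => K IH {}b hK hb.
case: (boolP [exists i, exists j, (i != j) && (0 < b i)%N && (0 < b j)%N]); last first.
  move=> /negP hnp.
  have np : forall i j, i != j -> (0 < b i)%N -> b j = 0%N.
    move=> i j ij bi; apply/eqP; rewrite -leqn0 leqNgt; apply/negP => bj.
    by apply: hnp; apply/existsP; exists i; apply/existsP; exists j; rewrite ij bi bj.
  case: (pickP (fun i => 0 < b i)%N) => [i0 bi0|none].
    have bz : forall j, j != i0 -> b j = 0%N by move=> j /negbTE; rewrite eq_sym => /negbT/np; apply.
    have hd : b i0 = d.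
      rewrite -hb mdegE (bigD1 i0) //= big1 ?addn0 // => j /bz //.
    have hbb : (b + b)%MM = V i0.
      apply/mnmP => j; rewrite mnmDE /mono_pure mnmE.
      case: eqP => [->|/eqP jn]; first by rewrite hd; lia.
      by rewrite bz.
    rewrite /Ebody (bigD1 i0) //= big1 ?addr0.
      by rewrite hbb hd subrr; exact: SOBS0.
    by move=> j /bz ->; rewrite scale0r.
  have bz : forall j, b j = 0%N by move=> j; move: (none j) => /= /negbT; rewrite -leqNgt leqn0 => /eqP.
  have hd : d = 0%N by rewrite -hb mdegE big1.
  rewrite /Ebody big1; last by move=> j _; rewrite bz scale0r.
  by rewrite hd scale0r subrr; exact: SOBS0.
case/existsP => i /existsP [j /andP [/andP [ij bi] bj]].
have ji : j != i by rewrite eq_sym.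
have bi0 : b i != 0%N by rewrite -lt0n.
have bj0 : b j != 0%N by rewrite -lt0n.
set s := (b i + b j)%N.
pose pt (k : nat) : 'X_{1..n} :=
  [multinom (if l == i then k else if l == j then (s - k)%N else b l) | l < n].
pose h (k : nat) := Mt t (pt k + pt k)%MM.
have ptE : forall k l, pt k l = (if l == i then k else if l == j then (s - k)%N else b l).
  by move=> k l; rewrite mnmE.
have ptb : pt (b i) = b.
  apply/mnmP => l; rewrite ptE; case: eqP => [->//|_]; case: eqP => [->|//]; rewrite /s; lia.
have hc : forall i1 j1 k, (i1 + j1 = k + k)%N -> (i1 <= s)%N -> (j1 <= s)%N ->
    SOBS (h i1 + h j1 - h k *+ 2).
  move=> i1 j1 k e h1 h2.
  have e' : (pt k + pt k)%MM = (pt i1 + pt j1)%MM.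
    apply/mnmP => l; rewrite !mnmDE !ptE; case: eqP => _; first lia.
    case: eqP => _ //; lia.
  rewrite /h e'; exact: basic.
have r1 := oneD hc s 0 (b i) ltac:(lia) ltac:(lia).
have hb2 : h (b i) = Mt t (b + b)%MM by rewrite /h ptb.
rewrite !add0n hb2 in r1.
have mdpt : forall k, (k <= s)%N -> mdeg (pt k) = d.
  move=> k ks; rewrite -hb !mdegE (bigD1 i) //= (bigD1 j) //= [in RHS](bigD1 i) //=.
  rewrite [in RHS](bigD1 j) //= !ptE eqxx (negbTE ji) eqxx !addnA; congr (_ + _).
    rewrite /s; lia.
  by apply eq_bigr => l /andP [li lj]; rewrite ptE (negbTE li) (negbTE lj).
have IP : SOBS (Ebody (pt 0)).
  apply: (IH (cnt (pt 0))) => //; last exact: mdpt.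
  rewrite -hK /cnt (bigD1 i) //= [in X in (_ < X)%N](bigD1 i) //= ptE eqxx /= bi0 add0n add1n ltnS.
  apply/eq_leq/eq_bigr => l li; rewrite ptE (negbTE li); case: (eqVneq l j) => [->|lj] //.
  by rewrite bj0 -lt0n /s; lia.
have IQ : SOBS (Ebody (pt s)).
  apply: (IH (cnt (pt s))) => //; last exact: mdpt.
  rewrite -hK /cnt (bigD1 j) //= [in X in (_ < X)%N](bigD1 j) //= ptE (negbTE ji) eqxx subnn /= bj0 add0n add1n ltnS.
  apply/eq_leq/eq_bigr => l lj; rewrite ptE (negbTE lj); case: (eqVneq l i) => [->|li] //.
  by rewrite bi0 -lt0n /s; lia.
have Hsum : (b j)%:R *: (\sum_(l < n) (pt 0 l)%:R *: Mt t (V l))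
          + (b i)%:R *: (\sum_(l < n) (pt s l)%:R *: Mt t (V l))
          = s%:R *: (\sum_(l < n) (b l)%:R *: Mt t (V l)) :> {mpoly R[n]}.
  rewrite !scaler_sumr -big_split /=; apply eq_bigr => l _.
  rewrite /Mt !scalerA -scalerDl -mulrDl; congr (_ * _ *: _); rewrite -!natrM -natrD; congr (_%:R).
  rewrite !ptE; case: (eqVneq l i) => [->|li]; first by rewrite ?eqxx /s; lia.
  case: (eqVneq l j) => [->|lj]; first by rewrite ?eqxx /s; lia.
  by rewrite /s; lia.
have spos : (0 < s)%N by rewrite /s; lia.
have sinv : 0 <= (s%:R : R)^-1 by rewrite invr_ge0 ler0n.
have := SOBSZ sinv (SOBSD (SOBSD (SOBSZ (ler0n R d) r1) (SOBSZ (ler0n R (b j)) IP)) (SOBSZ (ler0n R (b i)) IQ)).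
congr SOBS.
suff -> : d%:R *: ((s - b i)%:R *: h 0%N + (b i)%:R *: h s - s%:R *: Mt t (b + b)%MM) +
    (b j)%:R *: Ebody (pt 0) + (b i)%:R *: Ebody (pt s) = s%:R *: Ebody b.
  by rewrite scalerA mulVf ?scale1r // pnatr_eq0 -lt0n.
have -> : (s - b i)%N = b j by rewrite /s; lia.
rewrite /Ebody [in RHS]scalerBr -Hsum.
rewrite /h -!mul_mpolyC ?rmorphB ?rmorphD /= ?rmorph_nat /s ?natrD; ring.
Qed.
End Even.

Arguments SOBSD {n p q}.
Arguments SOBSZ {n c p}.
Arguments Mt {n}.
Arguments tpow {n}.
Arguments basic {n}.
Arguments evenH {n}.

Lemma split_mnm n (d : nat) (a : 'X_{1..n}) : (d <= mdeg a)%N ->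
  exists b c : 'X_{1..n}, (b + c)%MM = a /\ mdeg b = d.
Proof.
elim: d => [|d IH] h.
  by exists 0%MM, a; rewrite add0m mdeg0.
have [b [c [e hb]]] := IH (ltnW h).
have hc : mdeg c != 0%N by move: h; rewrite -e mdegD hb; lia.
have [i ci] : exists i, c i != 0%N.
  apply/existsP; apply: contraR hc; rewrite negb_exists => /forallP hz.
  rewrite mdegE big1 // => i _; move: (hz i); by rewrite negbK => /eqP.
exists (b + U_(i))%MM, (c - U_(i))%MM; split.
  rewrite -e; apply/mnmP => l; rewrite !mnmDE mnmBE mnm1E.
  case: eqP => [<-|_]; last by rewrite addn0 subn0.
  move: ci; lia.
by rewrite mdegD mdeg1 hb addn1.
Qed.

Lemma hurwitz n (t : 'I_n -> R) (d : nat) (a : 'X_{1..n}) : mdeg a = (2 * d)%N ->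
  SOBS (\sum_(i < n) (a i)%:R *: Mt t (mono_pure i (2 * d)) - (2 * d)%:R *: Mt t a).
Proof.
move=> ha.
have [b [c [e hb]]] := @split_mnm n d a ltac:(lia).
have hc : mdeg c = d by move: ha; rewrite -e mdegD hb; lia.
have := SOBSD (SOBSD (SOBSZ (ler0n R d) (basic t b c)) (evenH t d _ hb)) (evenH t d _ hc).
congr SOBS; rewrite /Ebody -e.
have -> : \sum_(i<n) ((b+c)%MM i)%:R *: Mt t (mono_pure i (2 * d)) =
   \sum_(i<n) (b i)%:R *: Mt t (mono_pure i (2 * d)) + \sum_(i<n) (c i)%:R *: Mt t (mono_pure i (2 * d)).
  by rewrite -big_split; apply eq_bigr => i _; rewrite mnmDE natrD scalerDl.
rewrite -!mul_mpolyC ?rmorphB ?rmorphD /= ?rmorph_nat ?natrM; ring.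
Qed.

Arguments SOBSD {n p q}.
Arguments SOBSZ {n c p}.
Arguments Mt {n}.
Arguments tpow {n}.
Arguments hurwitz {n}.

Lemma Rpower_gt0 x y : 0 < Rpower x y.
Proof. apply/RltP; exact: exp_pos. Qed.

Lemma Rpower_exp x y k : 0 < x -> Rpower x y ^+ k = Rpower x (y * k%:R).
Proof.
move=> x0; rewrite -RpowE -Rpower_pow ?Rpower_mult ?INRE //.
apply/RltP; exact: Rpower_gt0.
Qed.

Lemma Rpower_one x : 0 < x -> Rpower x 1 = x.
Proof. by move/RltP => x0; rewrite Rpower_1. Qed.

Lemma tpow_pure n (t : 'I_n -> R) (i : 'I_n) k : tpow t (mono_pure i k) = t i ^+ k.
Proof.
rewrite /tpow (bigD1 i) //= big1 ?mulr1; first by rewrite mnmE eqxx.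
by move=> j ji; rewrite mnmE (negbTE ji) expr0.
Qed.

Section Piece.
Variables (n d : nat) (f : {mpoly R[n]}).
Hypothesis d0 : (0 < d)%N.
Hypothesis hf : f \is (2 * d)%N.-homog.
Hypothesis fpos : forall i, 0 < coef_pure d f i.
Local Notation fi := (coef_pure d f).
Local Notation V i := (mono_pure i (2 * d)).

Definition cc (a : 'X_{1..n}) (i : 'I_n) : R :=
  delta_term d f a * (if a i == 0%N then 0 else fi i).

Lemma rpow_nat_gt0 (k : nat) (D : R) : 0 < rpow k%:R (k%:R / D).
Proof.
rewrite /rpow; case: (eqVneq k 0%N) => [->|k0]; first by rewrite mulr0n eqxx RdivE mul0r eqxx.
by rewrite pnatr_eq0 (negbTE k0) Rpower_gt0.
Qed.

Lemma delta_ge0 a : 0 <= delta_term d f a.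
Proof.
rewrite /delta_term; apply: divr_ge0; first apply: mulr_ge0 => //.
  by apply/ltW/prodr_gt0 => i _; apply: rpow_nat_gt0.
apply/mulr_ge0 => //; apply/ltW/prodr_gt0 => i _.
by rewrite /rpow (gt_eqF (fpos i)) Rpower_gt0.
Qed.

Lemma piece a : a \in msupp f -> DeltaF d f a ->
  SOBS (\sum_(i < n) cc a i *: 'X_[V i] + f@_a *: 'X_[a]).
Proof.
move=> am hD.
set D := ((2 * d)%:R : R).
have D0 : 0 < D by rewrite /D ltr0n muln_gt0 d0.
set e := D^-1.
pose sg i := if (0 < f@_a) && ([pick j | odd (a j)] == Some i) then -1 else (1 : R).
pose t i := sg i * (Rpower (fi i) e / Rpower (a i)%:R e).
have ha : mdeg a = (2 * d)%N := dhomog_mf hf am.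
have H := SOBSZ (delta_ge0 a) (hurwitz t d a ha).
suff -> : \sum_(i < n) cc a i *: 'X_[V i] + f@_a *: 'X_[a] =
  delta_term d f a *: (\sum_(i < n) (a i)%:R *: Mt t (V i) - (2 * d)%:R *: Mt t a) by [].
rewrite scalerBr scaler_sumr; congr (_ + _).
  apply eq_bigr => i _; rewrite /Mt tpow_pure !scalerA /cc; congr (_ *: _).
  rewrite -mulrA; congr (_ * _).
  case: eqP => [->|/eqP ai]; first by rewrite mul0r.
  have sg2 : sg i ^+ (2 * d) = 1.
    rewrite /sg; case: ifP => _; last by rewrite expr1n.
    by rewrite exprM sqrrN expr1n expr1n.
  have ai0 : 0 < (a i)%:R :> R by rewrite ltr0n lt0n.
  rewrite /t exprMn expr_div_n !Rpower_exp // sg2; rewrite /e /D !RmultE mulVf ?gt_eqF //.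
  rewrite !Rpower_one //; field; by rewrite gt_eqF.
rewrite /Mt !scalerA -scaleNr; congr (_ *: _).
set A := \prod_(i < n) rpow (a i)%:R ((a i)%:R / (2 * d)%:R).
set B := \prod_(i < n) rpow (fi i) ((a i)%:R / (2 * d)%:R).
have A0 : 0 < A by apply/prodr_gt0 => i _; apply: rpow_nat_gt0.
have B0 : 0 < B by apply/prodr_gt0 => i _; rewrite /rpow (gt_eqF (fpos i)) Rpower_gt0.
have htp : tpow t a = (\prod_(i < n) sg i ^+ a i) * (B / A).
  rewrite /tpow; under eq_bigr => i _ do rewrite /t exprMn expr_div_n.
  rewrite big_split prodf_div /=; congr (_ * (_ / _)).
    apply eq_bigr => i _; rewrite Rpower_exp // /rpow (gt_eqF (fpos i)) RmultE RdivE mulrC.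
    by rewrite /e /D.
  apply eq_bigr => i _; case: (eqVneq (a i) 0%N) => [->|ai].
    by rewrite expr0 /rpow mulr0n eqxx RdivE mul0r eqxx.
  have ai0 : 0 < (a i)%:R :> R by rewrite ltr0n lt0n.
  rewrite Rpower_exp // /rpow (gt_eqF ai0) RmultE RdivE mulrC.
  by rewrite /e /D.
have hS : (\prod_(i < n) sg i ^+ a i) * `|f@_a| = - f@_a.
  rewrite /sg; case: (boolP (0 < f@_a)) => fp /=; last first.
    rewrite big1 ?mul1r; last by move=> i _; rewrite expr1n.
    by rewrite ler0_norm // leNgt.
  have hodd : [exists j, odd (a j)].
    by move: hD; rewrite /DeltaF => /andP [_ /orP [fn|//]]; move: (lt_asym 0 (f@_a)); rewrite fp fn.
  case: pickP => [j0 hj0|none]; last first.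
    by move: hodd => /existsP [j hj]; move: (none j); rewrite hj.
  rewrite (bigD1 j0) //= eqxx big1 ?mulr1.
    by rewrite -signr_odd hj0 expr1 gtr0_norm // mulN1r.
  by move=> i ij; rewrite eq_sym (inj_eq (@Some_inj _)) (negbTE ij) expr1n.
rewrite htp /delta_term -/A -/B.
rewrite -[LHS]opprK -hS.
have D0' : D != 0 by rewrite gt_eqF.
move: (\prod_(i < n) sg i ^+ a i) (`|f@_a|) => S F. rewrite ?RmultE ?RdivE. field.
by rewrite !gt_eqF // ltr0n.
Qed.
End Piece.

Arguments SOBSD {n p q}.
Arguments SOBSZ {n c p}.

Lemma coef_filter n (p : {mpoly R[n]}) (P : pred 'X_{1..n}) m :
  (\sum_(a <- msupp p | P a) p@_a *: 'X_[a])@_m = if P m then p@_m else 0.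
Proof.
rewrite raddf_sum /= big_mkcond /=.
under eq_bigr => a _ do rewrite mcoeffZ mcoeffX.
case: (boolP (m \in msupp p)) => hm.
  rewrite (bigD1_seq m) ?msupp_uniq //= eqxx mulr1 big1 ?addr0 //.
  by move=> a am; rewrite (negbTE am) mulr0; case: (P a).
rewrite big_seq big1; first by move: hm; rewrite mcoeff_msupp negbK => /eqP ->; case: (P m).
move=> a ha; have : a != m by apply: contraNneq hm => <-.
by move/negbTE => ->; rewrite mulr0; case: (P a).
Qed.

Theorem corollary2p7 (n d : nat) (f : {mpoly R[n]}) :
  (0 < d)%N ->
  f \is (2 * d)%N.-homog ->
  (forall i : 'I_n, 0 < coef_pure d f i) ->
  \sum_(a <- msupp f | a \in DeltaF d f) delta_term d f a <= 1 ->
  SOBS f.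
Proof.
move=> d0 hf fpos hsum.
pose pure (a : 'X_{1..n}) := [exists i, a == mono_pure i (2 * d)].
pose C i := \sum_(a <- msupp f | a \in DeltaF d f) cc n d f a i.
have DeltaNP : forall a, a \in DeltaF d f -> ~~ pure a.
  move=> a; rewrite unfold_in /DeltaF /OmegaF => /andP [/andP [/andP [_ _] /forallP h] _].
  by rewrite negb_exists; apply/forallP.
have Vinj : forall i j : 'I_n, (mono_pure i (2*d) == mono_pure j (2*d)) = (i == j).
  move=> i j; apply/eqP/eqP => [e|->//]; move/mnmP: e => /(_ i); rewrite !mnmE eqxx.
  by case: eqP => // _; lia.
have pureV : forall i, pure (mono_pure i (2 * d)) by move=> i; apply/existsP; exists i.
have fE : f = \sum_(i < n) coef_pure d f i *: 'X_[mono_pure i (2 * d)]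
          + \sum_(a <- msupp f | a \in DeltaF d f) f@_a *: 'X_[a]
          + \sum_(a <- msupp f | ~~ pure a && (a \notin DeltaF d f)) f@_a *: 'X_[a].
  apply/mpolyP => m; rewrite !mcoeffD !coef_filter raddf_sum /=.
  under eq_bigr => i _ do rewrite mcoeffZ mcoeffX.
  case: (boolP (pure m)) => pm.
    have nD : (m \in DeltaF d f) = false.
      by apply/negbTE; apply: contraL pm; apply: DeltaNP.
    rewrite nD /=; case/existsP: pm => i0 /eqP ->.
    rewrite (bigD1 i0) //= eqxx mulr1 big1 ?addr0 //.
    by move=> i ii0; rewrite Vinj (negbTE ii0) mulr0.
  rewrite big1 ?add0r; last first.
    move=> i _; case: eqP => [e|_]; last by rewrite mulr0.
    by move: pm; rewrite -e pureV.
  by case: (m \in DeltaF d f); rewrite /= ?addr0 ?add0r.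
set Wr := \sum_(a <- msupp f | ~~ pure a && (a \notin DeltaF d f)) f@_a *: 'X_[a].
have key : f = \sum_(i < n) (coef_pure d f i - C i) *: 'X_[mono_pure i (2 * d)]
    + \sum_(a <- msupp f | a \in DeltaF d f)
        (\sum_(i < n) cc n d f a i *: 'X_[mono_pure i (2 * d)] + f@_a *: 'X_[a]) + Wr.
  rewrite {1}fE big_split /= exchange_big /= addrA; congr (_ + _ + _).
  rewrite -big_split /=; apply eq_bigr => i _.
  by rewrite -scaler_suml -scalerDl subrK.
rewrite key; apply: SOBSD; first apply: SOBSD.
- apply: SOBS_sum => i _.
  have -> : mono_pure i (2 * d) = (mono_pure i d + mono_pure i d)%MM.
    apply/mnmP => l; rewrite mnmDE !mnmE; case: eqP => _ //; lia.
  apply: SOBS_msq; rewrite subr_ge0 /C.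
  apply: (@le_trans _ _ (\sum_(a <- msupp f | a \in DeltaF d f) delta_term d f a * coef_pure d f i)).
    apply: ler_sum => a _; rewrite /cc; apply: ler_wpM2l; first exact: delta_ge0.
    by case: eqP => _ //; apply/ltW.
  rewrite -mulr_suml -[X in _ <= X]mul1r; apply: ler_wpM2r => //; exact/ltW.
- rewrite big_seq_cond; apply: SOBS_sum => a /andP [am hD].
  exact: (piece _ _ _ d0 hf fpos _ am hD).
rewrite /Wr big_seq_cond; apply: SOBS_sum => a /andP [am /andP [np nD]].
have fa0 : f@_a != 0 by rewrite -mcoeff_msupp.
have ha : mdeg a = (2 * d)%N := dhomog_mf hf am.
have a0 : a != 0%MM by apply/negP => /eqP e; move: ha; rewrite e mdeg0; lia.
have hO : OmegaF d f a.
  by rewrite /OmegaF fa0 a0 /=; apply/forallP => i; apply: contra np => /eqP ->; exact: pureV.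
move: nD; rewrite unfold_in /DeltaF hO /= negb_or => /andP [fn /existsPn ev].
have ea : a = ([multinom (a i)./2 | i < n] + [multinom (a i)./2 | i < n])%MM.
  apply/mnmP => i; rewrite mnmDE mnmE addnn halfK.
  by move: (ev i) => /negbTE ->; rewrite subn0.
rewrite {2}ea; by apply: SOBS_msq; rewrite leNgt.
Qed.
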